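(* Suppose Assumptions 1, 2 and 3 hold and problem (P) is feasible. Let $\lambda^*$ be a maximizer over $\mathbb{R}$ of the modified dual function $g^m$, so that $(\hat{x}_1(\lambda^* ),\dots,\hat{x}_N(\lambda^* ))$ is an optimal solution of (P). Consider the distributed dynamics $$\dot{\lambda}_i=d_i-\hat{x}_i(\lambda_i)+\phi_i\big(\hat{x}_i(\lambda_i)\big)+k\sum_{j\in\mathcal{N}_i}(\lambda_j-\lambda_i),\qquad i=1,\dots,N,$$ with gain $k>0$. Then for every $\epsilon>0$ there exist $\bar{k}>0$ and a function $T(\boldsymbol{\lambda}(0),k)$ such that for all $k>\bar{k}$ and every initial condition $\boldsymbol{\lambda}(0)=(\lambda_1(0),\dots,\lambda_N(0))\in\mathbb{R}^N$, $$|\hat{x}_i(\lambda_i(t))-\hat{x}_i(\lambda^* )|\le\epsilon\quad\text{for all } i\in\{1,\dots,N\}\text{ and all } t\ge T(\boldsymbol{\lambda}(0),k).$$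
   Context: For $i=1,\dots,N$: $d_i\in\mathbb{R}$, $\mathcal{X}_i=[\underline{x}_i,\bar{x}_i]$ a nonempty closed interval, $f_i,\phi_i:\mathbb{R}\to\mathbb{R}$. Problem (P): minimize $\sum_{i=1}^N f_i(x_i)$ subject to $\sum_{i=1}^N d_i=\sum_{i=1}^N(x_i-\phi_i(x_i))$ and $x_i\in\mathcal{X}_i$ for all $i$; feasibility is equivalent to $\sum_i(\underline{x}_i-\phi_i(\underline{x}_i))\le\sum_i d_i\le\sum_i(\bar{x}_i-\phi_i(\bar{x}_i))$. Assumption 1: for each $i$, $f_i$ and $\phi_i$ are continuously differentiable, $f_i$ is strictly convex on $\mathcal{X}_i$, $\phi_i$ is convex on $\mathcal{X}_i$, and $\phi_i'(x_i)<1$ for all $x_i\in\mathcal{X}_i$. Assumption 2: $f_i'(x_i)>0$ for all $x_i\in\mathcal{X}_i$ and all $i$. Assumption 3: the communication graph $\mathcal{G}=(\{1,\dots,N\},\mathcal{E})$ is undirected and connected; $\mathcal{N}_i=\{j:(j,i)\in\mathcal{E}\}$. Local Lagrangian: $\mathcal{L}^r_i(x_i,\lambda)=f_i(x_i)+\lambda(d_i-x_i+\phi_i(x_i))$. Let $v_i(x_i)=f_i'(x_i)(1-\phi_i'(x_i))^{-1}$ on $\mathcal{X}_i$ (strictly increasing). Define for $\lambda\in\mathbb{R}$: $\hat{x}_i(\lambda)=\underline{x}_i$ if $\lambda\le v_i(\underline{x}_i)$; $\hat{x}_i(\lambda)=v_i^{-1}(\lambda)$ if $v_i(\underline{x}_i)<\lambda<v_i(\bar{x}_i)$;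 $\hat{x}_i(\lambda)=\bar{x}_i$ if $\lambda\ge v_i(\bar{x}_i)$. Modified dual function: $g^m(\lambda)=\sum_{i=1}^N\mathcal{L}^r_i(\hat{x}_i(\lambda),\lambda)$. *)

(* Defs.v *)
From Stdlib Require Import Reals Lra ClassicalEpsilon.
Open Scope R_scope.

(* sumN n F = F 0 + ... + F (n-1)  (indices 0..n-1 play the role of 1..N) *)
Fixpoint sumN (n : nat) (F : nat -> R) : R :=
  match n with
  | O => 0
  | S m => sumN m F + F m
  end.

Definition strictly_convex_on (g : R -> R) (a b : R) : Prop :=
  forall x y t, a <= x <= b -> a <= y <= b -> x <> y -> 0 < t < 1 ->
    g (t * x + (1 - t) * y) < t * g x + (1 - t) * g y.

Definition convex_on (g : R -> R) (a b : R) : Prop :=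
  forall x y t, a <= x <= b -> a <= y <= b -> 0 <= t <= 1 ->
    g (t * x + (1 - t) * y) <= t * g x + (1 - t) * g y.

Definition vfun (df dphi : R -> R) (x : R) : R := df x / (1 - dphi x).

(* v^{-1}(lam): the point x in (xl, xu) with v x = lam (unique when v is
   continuous, strictly increasing and v xl < lam < v xu). *)
Definition vinv (v : R -> R) (xl xu lam : R) : R :=
  epsilon (inhabits 0) (fun x => xl < x < xu /\ v x = lam).

Definition xhat (df dphi : R -> R) (xl xu lam : R) : R :=
  let v := vfun df dphi in
  if Rle_dec lam (v xl) then xl
  else if Rle_dec (v xu) lam then xu
  else vinv v xl xu lam.

Definition Lr (f phi : R -> R) (d x lam : R) : R :=
  f x + lam * (d - x + phi x).

Definition gm (N : nat) (d xl xu : nat -> R) (f phi df dphi : nat -> R -> R)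
  (lam : R) : R :=
  sumN N (fun i => Lr (f i) (phi i) (d i)
                     (xhat (df i) (dphi i) (xl i) (xu i) lam) lam).

Inductive reach (N : nat) (a : nat -> nat -> bool) : nat -> nat -> Prop :=
| reach_refl : forall i, (i < N)%nat -> reach N a i i
| reach_step : forall i j l, (i < N)%nat -> (j < N)%nat -> a i j = true ->
    reach N a j l -> reach N a i l.

Definition connected (N : nat) (a : nat -> nat -> bool) : Prop :=
  forall i j, (i < N)%nat -> (j < N)%nat -> reach N a i j.

(* right-hand side of the distributed dynamics for agent i;
   neighbours N_i = { j < N | a j i = true } *)
Definition dyn_rhs (N : nat) (a : nat -> nat -> bool) (d xl xu : nat -> R)
  (phi df dphi : nat -> R -> R) (k : R) (lv : nat -> R) (i : nat) : R :=
  let xh := xhat (df i) (dphi i) (xl i) (xu i) (lv i) in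
  d i - xh + phi i xh
  + k * sumN N (fun j => if a j i then lv j - lv i else 0).

Definition is_solution (N : nat) (a : nat -> nat -> bool) (d xl xu : nat -> R)
  (phi df dphi : nat -> R -> R) (k : R) (lam : R -> nat -> R) : Prop :=
  (forall i t, (i < N)%nat -> 0 < t ->
     derivable_pt_lim (fun s => lam s i) t
       (dyn_rhs N a d xl xu phi df dphi k (lam t) i)) /\
  (forall i, (i < N)%nat -> forall e, 0 < e -> exists delta, 0 < delta /\
     forall t, 0 <= t < delta -> Rabs (lam t i - lam 0 i) < e).

(* Main.v *)
Require Import Defs.
From Stdlib Require Import Reals Lra Lia ClassicalEpsilon Ranalysis5.
Open Scope R_scope.

Lemma dpl_plus f g x l1 l2 : derivable_pt_lim f x l1 -> derivable_pt_lim g x l2 ->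
  derivable_pt_lim (fun y => f y + g y) x (l1 + l2).
Proof. intros; exact (derivable_pt_lim_plus f g x l1 l2 H H0). Qed.
Lemma dpl_minus f g x l1 l2 : derivable_pt_lim f x l1 -> derivable_pt_lim g x l2 ->
  derivable_pt_lim (fun y => f y - g y) x (l1 - l2).
Proof. intros; exact (derivable_pt_lim_minus f g x l1 l2 H H0). Qed.
Lemma dpl_mult f g x l1 l2 : derivable_pt_lim f x l1 -> derivable_pt_lim g x l2 ->
  derivable_pt_lim (fun y => f y * g y) x (l1 * g x + f x * l2).
Proof. intros; exact (derivable_pt_lim_mult f g x l1 l2 H H0). Qed.
Lemma dpl_const c x : derivable_pt_lim (fun _ => c) x 0.
Proof. exact (derivable_pt_lim_const c x). Qed.
Lemma dpl_id x : derivable_pt_lim (fun y => y) x 1.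
Proof. exact (derivable_pt_lim_id x). Qed.
Lemma dpl_comp f g x l1 l2 : derivable_pt_lim f x l1 -> derivable_pt_lim g (f x) l2 ->
  derivable_pt_lim (fun y => g (f y)) x (l2 * l1).
Proof. intros; exact (derivable_pt_lim_comp f g x l1 l2 H H0). Qed.
Lemma dpl_ext f g x l : (forall y, f y = g y) -> derivable_pt_lim f x l -> derivable_pt_lim g x l.
Proof. intros E H e He. destruct (H e He) as [d Hd]. exists d. intros h Hh Hh'.
  rewrite <- !E. auto. Qed.
Lemma dpl_eq f x l l' : l = l' -> derivable_pt_lim f x l -> derivable_pt_lim f x l'.
Proof. intros ->; auto. Qed.
Lemma dpl_cont f x l : derivable_pt_lim f x l -> continuity_pt f x.
Proof. intro H. apply derivable_continuous_pt. exists l. exact H. Qed.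

Lemma sumN_ext n F G : (forall i, (i < n)%nat -> F i = G i) -> sumN n F = sumN n G.
Proof. induction n; simpl; intros; auto. rewrite IHn by (intros; apply H; lia). rewrite H by lia. auto. Qed.
Lemma sumN_plus n F G : sumN n (fun i => F i + G i) = sumN n F + sumN n G.
Proof. induction n; simpl; [lra|]. rewrite IHn. lra. Qed.
Lemma sumN_minus n F G : sumN n (fun i => F i - G i) = sumN n F - sumN n G.
Proof. induction n; simpl; [lra|]. rewrite IHn. lra. Qed.
Lemma sumN_scal n c F : sumN n (fun i => c * F i) = c * sumN n F.
Proof. induction n; simpl; [lra|]. rewrite IHn. lra. Qed.
Lemma sumN_zero n : sumN n (fun _ => 0) = 0.
Proof. induction n; simpl; [lra|]. rewrite IHn. lra. Qed.
Lemma sumN_const n c : sumN n (fun _ => c) = INR n * c.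
Proof. induction n; simpl sumN; [simpl; lra|]. rewrite IHn, S_INR. lra. Qed.
Lemma sumN_le n F G : (forall i, (i < n)%nat -> F i <= G i) -> sumN n F <= sumN n G.
Proof. induction n; simpl; intros; [lra|]. assert (F n <= G n) by (apply H; lia).
  assert (sumN n F <= sumN n G) by (apply IHn; intros; apply H; lia). lra. Qed.
Lemma sumN_nonneg n F : (forall i, (i < n)%nat -> 0 <= F i) -> 0 <= sumN n F.
Proof. intros. rewrite <- (sumN_zero n). apply sumN_le. auto. Qed.
Lemma sumN_term n F j : (forall i, (i < n)%nat -> 0 <= F i) -> (j < n)%nat -> F j <= sumN n F.
Proof. induction n; simpl; intros; [lia|].
  assert (0 <= sumN n F) by (apply sumN_nonneg; intros; apply H; lia).
  destruct (Nat.eq_dec j n). subst. lra.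
  assert (F j <= sumN n F) by (apply IHn; [intros; apply H; lia| lia]).
  assert (0 <= F n) by (apply H; lia). lra. Qed.
Lemma sumN_swap n m F : sumN n (fun p => sumN m (fun q => F p q)) = sumN m (fun q => sumN n (fun p => F p q)).
Proof. induction n; simpl.
  - rewrite sumN_zero. auto.
  - rewrite IHn. rewrite <- sumN_plus. auto. Qed.
Lemma dpl_sumN n F F' x : (forall i, (i < n)%nat -> derivable_pt_lim (F i) x (F' i)) ->
  derivable_pt_lim (fun y => sumN n (fun i => F i y)) x (sumN n F').
Proof. induction n; simpl; intros.
  - apply dpl_const.
  - apply dpl_plus. apply IHn; intros; apply H; lia. apply H; lia. Qed.

Lemma div_le a b c d : 0 < b -> 0 < d -> a * d <= c * b -> a / b <= c / d.
Proof. intros. assert (a/b - c/d = (a*d - c*b) * / (b*d)) by (field; lra).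
  assert (0 < /(b*d)) by (apply Rinv_0_lt_compat; nra). nra. Qed.
Lemma div_lt a b c d : 0 < b -> 0 < d -> a * d < c * b -> a / b < c / d.
Proof. intros. assert (a/b - c/d = (a*d - c*b) * / (b*d)) by (field; lra).
  assert (0 < /(b*d)) by (apply Rinv_0_lt_compat; nra). nra. Qed.

Lemma deriv_le_slope g x l H S : derivable_pt_lim g x l -> 0 < H ->
  (forall h, 0 < h < H -> (g (x+h) - g x)/h <= S) -> l <= S.
Proof. intros Hd HH Hs. destruct (Rle_dec l S) as [|n]; auto. exfalso.
  destruct (Hd (l - S) ltac:(lra)) as [[dl Hdl] Hq]. simpl in Hq.
  set (h := Rmin (dl/2) (H/2)).
  assert (0 < h) by (unfold h; apply Rmin_pos; lra).
  assert (h <= dl/2) by apply Rmin_l. assert (h <= H/2) by apply Rmin_r.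
  specialize (Hq h ltac:(lra) ltac:(rewrite Rabs_pos_eq; lra)).
  specialize (Hs h ltac:(lra)).
  apply Rabs_def2 in Hq. lra. Qed.

Lemma deriv_ge_slope g y l H S : derivable_pt_lim g y l -> 0 < H ->
  (forall h, 0 < h < H -> S <= (g y - g (y-h))/h) -> S <= l.
Proof. intros Hd HH Hs. destruct (Rle_dec S l) as [|n]; auto. exfalso.
  destruct (Hd (S - l) ltac:(lra)) as [[dl Hdl] Hq]. simpl in Hq.
  set (h := Rmin (dl/2) (H/2)).
  assert (0 < h) by (unfold h; apply Rmin_pos; lra).
  assert (h <= dl/2) by apply Rmin_l. assert (h <= H/2) by apply Rmin_r.
  specialize (Hq (-h) ltac:(lra) ltac:(rewrite Rabs_Ropp, Rabs_pos_eq; lra)).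
  specialize (Hs h ltac:(lra)).
  replace ((g (y + - h) - g y) / - h) with ((g y - g (y - h))/h) in Hq
    by (replace (y + - h) with (y - h) by ring; field; lra).
  apply Rabs_def2 in Hq. lra. Qed.

Lemma convex_chord g a b x z y : convex_on g a b -> a <= x -> x < z -> z < y -> y <= b ->
  g z * (y - x) <= (y - z) * g x + (z - x) * g y.
Proof. intros Hc. intros.
  set (t := (y - z)/(y - x)).
  assert (Ht : t * x + (1 - t) * y = z) by (unfold t; field; lra).
  assert (0 <= t <= 1). { unfold t; split.
    apply Rmult_le_pos; [lra| left; apply Rinv_0_lt_compat; lra].
    apply (Rmult_le_reg_r (y - x)); [lra|]. unfold Rdiv. rewrite Rmult_assoc, Rinv_l; lra. }
  pose proof (Hc x y t ltac:(lra) ltac:(lra) H3). rewrite Ht in H4.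
  apply (Rmult_le_compat_r (y - x)) in H4; [|lra].
  replace ((t * g x + (1 - t) * g y) * (y - x)) with ((y - z) * g x + (z - x) * g y) in H4
    by (unfold t; field; lra). lra. Qed.

Lemma sconvex_chord g a b x z y : strictly_convex_on g a b -> a <= x -> x < z -> z < y -> y <= b ->
  g z * (y - x) < (y - z) * g x + (z - x) * g y.
Proof. intros Hc. intros.
  set (t := (y - z)/(y - x)).
  assert (Ht : t * x + (1 - t) * y = z) by (unfold t; field; lra).
  assert (0 < t < 1). { unfold t; split.
    apply Rmult_lt_0_compat; [lra| apply Rinv_0_lt_compat; lra].
    apply (Rmult_lt_reg_r (y - x)); [lra|]. unfold Rdiv. rewrite Rmult_assoc, Rinv_l; lra. }
  pose proof (Hc x y t ltac:(lra) ltac:(lra) ltac:(lra) H3). rewrite Ht in H4.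
  apply (Rmult_lt_compat_r (y - x)) in H4; [|lra].
  replace ((t * g x + (1 - t) * g y) * (y - x)) with ((y - z) * g x + (z - x) * g y) in H4
    by (unfold t; field; lra). lra. Qed.

Lemma sconvex_convex g a b : strictly_convex_on g a b -> convex_on g a b.
Proof. intros Hc x y t Hx Hy Ht.
  destruct (Req_dec x y) as [->|Hxy].
  { replace (t * y + (1 - t) * y) with y by ring. lra. }
  destruct (Req_dec t 0) as [->|H0].
  { replace (0 * x + (1 - 0) * y) with y by ring. lra. }
  destruct (Req_dec t 1) as [->|H1].
  { replace (1 * x + (1 - 1) * y) with x by ring. lra. }
  left. apply Hc; auto. lra. Qed.

Lemma convex_deriv_left g g' a b x y : convex_on g a b -> derivable_pt_lim g x (g' x) ->
  a <= x -> x < y -> y <= b -> g' x <= (g y - g x)/(y - x).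
Proof. intros Hc Hd. intros. apply (deriv_le_slope g x _ (y - x)); auto. lra.
  intros h Hh. replace h with ((x + h) - x) at 2 by ring.
  apply div_le; try lra.
  pose proof (convex_chord g a b x (x+h) y Hc ltac:(lra) ltac:(lra) ltac:(lra) ltac:(lra)). nra. Qed.

Lemma convex_deriv_right g g' a b x y : convex_on g a b -> derivable_pt_lim g y (g' y) ->
  a <= x -> x < y -> y <= b -> (g y - g x)/(y - x) <= g' y.
Proof. intros Hc Hd. intros. apply (deriv_ge_slope g y _ (y - x)); auto. lra.
  intros h Hh. replace h with (y - (y - h)) at 2 by ring.
  apply div_le; try lra.
  pose proof (convex_chord g a b x (y-h) y Hc ltac:(lra) ltac:(lra) ltac:(lra) ltac:(lra)). nra. Qed.

Lemma convex_deriv_mono g g' a b x y : convex_on g a b ->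
  (forall z, derivable_pt_lim g z (g' z)) -> a <= x -> x < y -> y <= b -> g' x <= g' y.
Proof. intros. pose proof (convex_deriv_left g g' a b x y H (H0 x) H1 H2 H3).
  pose proof (convex_deriv_right g g' a b x y H (H0 y) H1 H2 H3). lra. Qed.

Lemma sconvex_deriv_mono g g' a b x y : strictly_convex_on g a b ->
  (forall z, derivable_pt_lim g z (g' z)) -> a <= x -> x < y -> y <= b -> g' x < g' y.
Proof. intros. set (m := (x + y)/2).
  pose proof (sconvex_convex _ _ _ H) as Hc.
  pose proof (convex_deriv_left g g' a b x m Hc (H0 x) H1 ltac:(unfold m; lra) ltac:(unfold m; lra)).
  pose proof (convex_deriv_right g g' a b x y Hc (H0 y) H1 H2 H3).
  assert ((g m - g x)/(m - x) < (g y - g x)/(y - x)).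
  { apply div_lt; try (unfold m; lra).
    pose proof (sconvex_chord g a b x m y H H1 ltac:(unfold m; lra) ltac:(unfold m; lra) H3). nra. }
  lra. Qed.

Definition agent_ok (f phi df dphi : R -> R) (xl xu : R) : Prop :=
  xl <= xu /\
  (forall x, derivable_pt_lim f x (df x)) /\
  (forall x, continuity_pt df x) /\
  (forall x, derivable_pt_lim phi x (dphi x)) /\
  (forall x, continuity_pt dphi x) /\
  strictly_convex_on f xl xu /\ convex_on phi xl xu /\
  (forall x, xl <= x <= xu -> dphi x < 1) /\
  (forall x, xl <= x <= xu -> 0 < df x).

Ltac agent H := destruct H as (Hle & Hdf & Hdfc & Hdp & Hdpc & Hfc & Hpc & Hd1 & Hpos).

Lemma v_pos f phi df dphi xl xu x : agent_ok f phi df dphi xl xu -> xl <= x <= xu ->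
  0 < vfun df dphi x.
Proof. intro H; agent H; intros. unfold vfun.
  specialize (Hd1 x H). specialize (Hpos x H).
  apply Rdiv_lt_0_compat; lra. Qed.

Lemma v_mono f phi df dphi xl xu x y : agent_ok f phi df dphi xl xu -> xl <= x -> x < y -> y <= xu ->
  vfun df dphi x < vfun df dphi y.
Proof. intro H; agent H; intros. unfold vfun.
  pose proof (sconvex_deriv_mono f df xl xu x y Hfc Hdf H H0 H1).
  pose proof (convex_deriv_mono phi dphi xl xu x y Hpc Hdp H H0 H1).
  pose proof (Hd1 x ltac:(lra)). pose proof (Hd1 y ltac:(lra)).
  pose proof (Hpos x ltac:(lra)).
  apply div_lt; nra. Qed.

Lemma v_cont f phi df dphi xl xu x : agent_ok f phi df dphi xl xu -> xl <= x <= xu ->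
  continuity_pt (vfun df dphi) x.
Proof. intro H; agent H; intros. unfold vfun.
  apply (continuity_pt_div df (fun x => 1 - dphi x)); auto.
  apply (continuity_pt_minus (fct_cte 1) dphi). apply continuity_pt_const. intros a b; auto.
  auto. specialize (Hd1 x H). lra. Qed.

Definition Xh df dphi xl xu := xhat df dphi xl xu.

Lemma X_spec f phi df dphi xl xu lam : agent_ok f phi df dphi xl xu ->
  (lam <= vfun df dphi xl -> xhat df dphi xl xu lam = xl) /\
  (~ lam <= vfun df dphi xl -> vfun df dphi xu <= lam -> xhat df dphi xl xu lam = xu) /\
  (~ lam <= vfun df dphi xl -> ~ vfun df dphi xu <= lam ->
     xl < xhat df dphi xl xu lam < xu /\ vfun df dphi (xhat df dphi xl xu lam) = lam).
Proof. intro H. unfold xhat. simpl. split; [|split].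
  - intro. destruct (Rle_dec lam (vfun df dphi xl)); tauto.
  - intros. destruct (Rle_dec lam (vfun df dphi xl)); [tauto|].
    destruct (Rle_dec (vfun df dphi xu) lam); tauto.
  - intros. destruct (Rle_dec lam (vfun df dphi xl)); [tauto|].
    destruct (Rle_dec (vfun df dphi xu) lam); [tauto|].
    unfold vinv. apply epsilon_spec.
    pose proof H as H'. agent H'.
    assert (xl < xu). { destruct Hle; auto. subst. lra. }
    destruct (IVT_interv (fun x => vfun df dphi x - lam) xl xu) as [z [Hz1 Hz2]]; auto.
    + intros a Ha. apply (continuity_pt_minus (vfun df dphi) (fct_cte lam)).
      eapply v_cont; eauto. apply continuity_pt_const. intros p q; auto.
    + lra.
    + lra.
    + exists z. split; [|lra]. split.
      * destruct (proj1 Hz1); auto. subst. lra.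
      * destruct (proj2 Hz1); auto. subst. lra. Qed.

Lemma X_in f phi df dphi xl xu lam : agent_ok f phi df dphi xl xu ->
  xl <= xhat df dphi xl xu lam <= xu.
Proof. intro H. pose proof (X_spec _ _ _ _ _ _ lam H) as (A1 & A2 & A3).
  pose proof H as H'. agent H'.
  destruct (Rle_dec lam (vfun df dphi xl)). rewrite A1; lra.
  destruct (Rle_dec (vfun df dphi xu) lam). rewrite A2; auto; lra.
  destruct (A3 n n0). lra. Qed.

Lemma X_le f phi df dphi xl xu lam x : agent_ok f phi df dphi xl xu -> xl <= x <= xu ->
  lam <= vfun df dphi x -> xhat df dphi xl xu lam <= x.
Proof. intros H Hx Hl. pose proof (X_spec _ _ _ _ _ _ lam H) as (A1 & A2 & A3).
  destruct (Rle_dec lam (vfun df dphi xl)). rewrite A1; lra.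
  destruct (Rle_dec (vfun df dphi xu) lam). rewrite A2; auto.
  destruct (Rle_dec xu x); auto. pose proof (v_mono _ _ _ _ _ _ x xu H ltac:(lra) ltac:(lra) ltac:(lra)). lra.
  destruct (A3 n n0) as [B1 B2].
  destruct (Rle_dec (xhat df dphi xl xu lam) x); auto.
  pose proof (v_mono _ _ _ _ _ _ x (xhat df dphi xl xu lam) H ltac:(lra) ltac:(lra) ltac:(lra)). lra. Qed.

Lemma X_ge f phi df dphi xl xu lam x : agent_ok f phi df dphi xl xu -> xl <= x <= xu ->
  vfun df dphi x <= lam -> x <= xhat df dphi xl xu lam.
Proof. intros H Hx Hl. pose proof (X_spec _ _ _ _ _ _ lam H) as (A1 & A2 & A3).
  destruct (Rle_dec lam (vfun df dphi xl)). rewrite A1; auto.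
  destruct (Rle_dec x xl); auto. pose proof (v_mono _ _ _ _ _ _ xl x H ltac:(lra) ltac:(lra) ltac:(lra)). lra.
  destruct (Rle_dec (vfun df dphi xu) lam). rewrite A2; auto. lra.
  destruct (A3 n n0) as [B1 B2].
  destruct (Rle_dec x (xhat df dphi xl xu lam)); auto.
  pose proof (v_mono _ _ _ _ _ _ (xhat df dphi xl xu lam) x H ltac:(lra) ltac:(lra) ltac:(lra)). lra. Qed.

Lemma X_cont f phi df dphi xl xu lam0 : agent_ok f phi df dphi xl xu ->
  continuity_pt (xhat df dphi xl xu) lam0.
Proof. intros H e He. pose proof H as H'. agent H'.
  set (x0 := xhat df dphi xl xu lam0).
  pose proof (X_in _ _ _ _ _ _ lam0 H) as Hx0. fold x0 in Hx0.
  assert (U : exists d1, 0 < d1 /\ forall lam, lam < lam0 + d1 -> xhat df dphi xl xu lam <= x0 + e/2).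
  { destruct (Rle_dec xu (x0 + e/2)).
    - exists 1. split; [lra|]. intros. pose proof (X_in _ _ _ _ _ _ lam H). lra.
    - assert (lam0 < vfun df dphi (x0 + e/2)).
      { destruct (Rlt_dec lam0 (vfun df dphi (x0 + e/2))); auto.
        pose proof (X_ge _ _ _ _ _ _ lam0 (x0 + e/2) H ltac:(lra) ltac:(lra)) as Hq. fold x0 in Hq. lra. }
      exists (vfun df dphi (x0 + e/2) - lam0). split; [lra|]. intros.
      apply X_le with (f := f) (phi := phi); auto; lra. }
  assert (L : exists d2, 0 < d2 /\ forall lam, lam0 - d2 < lam -> x0 - e/2 <= xhat df dphi xl xu lam).
  { destruct (Rle_dec (x0 - e/2) xl).
    - exists 1. split; [lra|]. intros. pose proof (X_in _ _ _ _ _ _ lam H). lra.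
    - assert (vfun df dphi (x0 - e/2) < lam0).
      { destruct (Rlt_dec (vfun df dphi (x0 - e/2)) lam0); auto.
        pose proof (X_le _ _ _ _ _ _ lam0 (x0 - e/2) H ltac:(lra) ltac:(lra)) as Hq. fold x0 in Hq. lra. }
      exists (lam0 - vfun df dphi (x0 - e/2)). split; [lra|]. intros.
      apply X_ge with (f := f) (phi := phi); auto; lra. }
  destruct U as [d1 [Hd1' U]]. destruct L as [d2 [Hd2' L]].
  exists (Rmin d1 d2). split. apply Rmin_pos; auto.
  intros lam [_ Hl]. simpl in Hl. unfold R_dist in *.
  assert (Rmin d1 d2 <= d1) by apply Rmin_l. assert (Rmin d1 d2 <= d2) by apply Rmin_r.
  apply Rabs_def2 in Hl. specialize (U lam ltac:(lra)). specialize (L lam ltac:(lra)).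
  fold x0. apply Rabs_def1; lra. Qed.

Lemma mvt_incr g g' a b : a < b -> (forall c, derivable_pt_lim g c (g' c)) ->
  (forall c, a < c < b -> 0 < g' c) -> g a < g b.
Proof. intros. destruct (MVT_cor2 g g' a b H (fun c _ => H0 c)) as [c [E Hc]].
  specialize (H1 c Hc). nra. Qed.
Lemma mvt_decr g g' a b : a < b -> (forall c, derivable_pt_lim g c (g' c)) ->
  (forall c, a < c < b -> g' c < 0) -> g b < g a.
Proof. intros. destruct (MVT_cor2 g g' a b H (fun c _ => H0 c)) as [c [E Hc]].
  specialize (H1 c Hc). nra. Qed.

Lemma Lr_deriv f phi df dphi d lam y :
  (forall x, derivable_pt_lim f x (df x)) -> (forall x, derivable_pt_lim phi x (dphi x)) ->
  derivable_pt_lim (fun x => Lr f phi d x lam) y (df y + lam * (-1 + dphi y)).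
Proof. intros. unfold Lr. apply (dpl_plus f (fun x => lam * (d - x + phi x))); auto.
  apply (dpl_eq _ _ (0 * (d - y + phi y) + lam * (0 - 1 + dphi y))); [ring|].
  apply (dpl_mult (fun _ => lam) (fun x => d - x + phi x)); [apply dpl_const| apply (dpl_plus (fun x => d - x) phi); [apply (dpl_minus (fun _ => d) (fun x => x)); [apply dpl_const|apply dpl_id]| apply H0]].
Qed.

Lemma X_min f phi df dphi xl xu d lam x : agent_ok f phi df dphi xl xu -> xl <= x <= xu ->
  Lr f phi d (xhat df dphi xl xu lam) lam <= Lr f phi d x lam.
Proof. intros H Hx. pose proof H as H'. agent H'.
  set (X := xhat df dphi xl xu lam).
  pose proof (X_in _ _ _ _ _ _ lam H) as HX. fold X in HX.
  assert (Hid : forall c, xl <= c <= xu -> df c + lam * (-1 + dphi c) = (1 - dphi c) * (vfun df dphi c - lam)).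
  { intros. unfold vfun. pose proof (Hd1 c H0). field. lra. }
  destruct (Rtotal_order x X) as [Hlt|[Heq|Hgt]].
  - left. apply (mvt_decr (fun y => Lr f phi d y lam) (fun y => df y + lam * (-1 + dphi y))); auto.
    intro; apply Lr_deriv; auto.
    intros c Hc. rewrite Hid by lra. pose proof (Hd1 c ltac:(lra)).
    assert (vfun df dphi c < lam).
    { destruct (Rlt_dec (vfun df dphi c) lam); auto.
      pose proof (X_le _ _ _ _ _ _ lam c H ltac:(lra) ltac:(lra)) as Hq. fold X in Hq. lra. }
    nra.
  - rewrite Heq; lra.
  - left. apply (mvt_incr (fun y => Lr f phi d y lam) (fun y => df y + lam * (-1 + dphi y))); auto.
    intro; apply Lr_deriv; auto.
    intros c Hc. rewrite Hid by lra. pose proof (Hd1 c ltac:(lra)).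
    assert (lam < vfun df dphi c).
    { destruct (Rlt_dec lam (vfun df dphi c)); auto.
      pose proof (X_ge _ _ _ _ _ _ lam c H ltac:(lra) ltac:(lra)) as Hq. fold X in Hq. lra. }
    nra. Qed.

Definition gfun f phi df dphi xl xu d lam := Lr f phi d (xhat df dphi xl xu lam) lam.
Definition ufun phi df dphi xl xu d lam :=
  d - xhat df dphi xl xu lam + phi (xhat df dphi xl xu lam).

Lemma g_super f phi df dphi xl xu d lam mu : agent_ok f phi df dphi xl xu ->
  gfun f phi df dphi xl xu d mu <= gfun f phi df dphi xl xu d lam + ufun phi df dphi xl xu d lam * (mu - lam).
Proof. intros H. unfold gfun, ufun.
  pose proof (X_min _ _ _ _ _ _ d mu (xhat df dphi xl xu lam) H (X_in _ _ _ _ _ _ lam H)).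
  unfold Lr in *. lra. Qed.

Lemma envelope F u x : (forall m, F m <= F x + u x * (m - x)) ->
  (forall m, F x <= F m + u m * (x - m)) -> continuity_pt u x -> derivable_pt_lim F x (u x).
Proof. intros H1 H2 Hc e He. destruct (Hc e He) as [dl [Hdl Hq]].
  exists (mkposreal dl Hdl). intros h Hh Hh'. simpl in Hh'.
  assert (Hb : Rabs (u (x + h) - u x) < e).
  { apply (Hq (x + h)). split. unfold D_x, no_cond. split; auto. intro; apply Hh; lra.
    simpl. unfold R_dist. replace (x + h - x) with h by ring. auto. }
  specialize (H1 (x + h)). specialize (H2 (x + h)).
  replace (x + h - x) with h in H1 by ring. replace (x - (x + h)) with (- h) in H2 by ring.
  apply Rabs_def2 in Hb.
  destruct (Rlt_dec 0 h).
  - assert (Q1 : (F (x + h) - F x) / h <= u x).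
    { apply (Rmult_le_reg_r h); auto. unfold Rdiv; rewrite Rmult_assoc, Rinv_l; lra. }
    assert (Q2 : u (x + h) <= (F (x + h) - F x) / h).
    { apply (Rmult_le_reg_r h); auto. unfold Rdiv; rewrite Rmult_assoc, Rinv_l; lra. }
    apply Rabs_def1; lra.
  - assert (h < 0) by (destruct (Rtotal_order h 0) as [|[|]]; auto; lra).
    assert (Q1 : u x <= (F (x + h) - F x) / h).
    { apply (Rmult_le_reg_r (-h)); [lra|].
      replace ((F (x + h) - F x) / h * - h) with (F x - F (x + h)) by (field; lra). lra. }
    assert (Q2 : (F (x + h) - F x) / h <= u (x + h)).
    { apply (Rmult_le_reg_r (-h)); [lra|].
      replace ((F (x + h) - F x) / h * - h) with (F x - F (x + h)) by (field; lra). lra. }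
    apply Rabs_def1; lra. Qed.

Lemma u_cont f phi df dphi xl xu d lam : agent_ok f phi df dphi xl xu ->
  continuity_pt (ufun phi df dphi xl xu d) lam.
Proof. intros H. pose proof (X_cont _ _ _ _ _ _ lam H) as HX. pose proof H as H'. agent H'.
  unfold ufun.
  apply (continuity_pt_plus (fun l => d - xhat df dphi xl xu l) (fun l => phi (xhat df dphi xl xu l))).
  apply (continuity_pt_minus (fct_cte d) (xhat df dphi xl xu)); auto. apply continuity_pt_const; intros p q; auto.
  apply (continuity_pt_comp (xhat df dphi xl xu) phi); auto.
  apply (dpl_cont phi _ (dphi (xhat df dphi xl xu lam))); apply Hdp. Qed.

Lemma g_deriv f phi df dphi xl xu d lam : agent_ok f phi df dphi xl xu ->
  derivable_pt_lim (gfun f phi df dphi xl xu d) lam (ufun phi df dphi xl xu d lam).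
Proof. intros H. apply envelope.
  intro; apply (g_super f); auto.
  intro m. pose proof (g_super _ _ _ _ _ _ d m lam H). lra.
  apply (u_cont f); auto. Qed.

Definition jsig (f : R -> R) x1 y := f x1 / 2 + f y / 2 - f ((x1 + y) / 2).

Lemma gap f phi df dphi xl xu d lam x1 : agent_ok f phi df dphi xl xu -> xl <= x1 <= xu ->
  2 * jsig f x1 (xhat df dphi xl xu lam) <= Lr f phi d x1 lam - Lr f phi d (xhat df dphi xl xu lam) lam.
Proof. intros H Hx1. pose proof H as H'. agent H'.
  set (y := xhat df dphi xl xu lam).
  pose proof (X_in _ _ _ _ _ _ lam H) as Hy. fold y in Hy.
  unfold jsig. set (m := (x1 + y)/2).
  destruct (Rle_dec 0 lam).
  - pose proof (X_min _ _ _ _ _ _ d lam m H ltac:(unfold m; lra)) as Hm. fold y in Hm.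
    assert (Hphi : phi m <= 1/2 * phi x1 + (1 - 1/2) * phi y).
    { unfold m. replace ((x1 + y)/2) with (1/2 * x1 + (1 - 1/2) * y) by field.
      apply Hpc; lra. }
    assert (lam * phi m <= lam * (1/2 * phi x1 + (1 - 1/2) * phi y)) by (apply Rmult_le_compat_l; lra).
    unfold Lr in *. unfold m in *. clear -Hm H0. lra.
  - assert (y = xl). { unfold y. apply (proj1 (X_spec _ _ _ _ _ _ lam H)).
      pose proof (v_pos _ _ _ _ _ _ xl H ltac:(lra)). lra. }
    assert (Hf : f xl <= f m).
    { assert (xl <= m) by (unfold m; lra). destruct (Rle_lt_or_eq_dec xl m H1) as [E|E]; [|rewrite E; lra].
      left. apply (mvt_incr f df); auto. intros c Hc. apply Hpos. unfold m in *; lra. }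
    assert (HG : xl - phi xl <= x1 - phi x1).
    { destruct (Rle_lt_or_eq_dec xl x1 (proj1 Hx1)) as [E|E]; [|rewrite E; lra].
      left. apply (mvt_incr (fun z => z - phi z) (fun z => 1 - dphi z)); auto.
      intro; apply dpl_minus; auto. apply dpl_id.
      intros c Hc. pose proof (Hd1 c ltac:(lra)). lra. }
    rewrite H0 in *. unfold Lr. unfold m in *.
    assert (lam * (x1 - phi x1 - (xl - phi xl)) <= 0) by nra.
    lra. Qed.

Lemma dpl_half a y : derivable_pt_lim (fun y => (a + y) / 2) y (1/2).
Proof. apply (dpl_eq _ _ ((0 + 1) * / 2 + (a + y) * 0)); [field|].
  apply (dpl_mult (fun y => a + y) (fun _ => / 2)).
  apply (dpl_plus (fun _ => a) (fun y => y)). apply dpl_const. apply dpl_id. apply dpl_const. Qed.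

Lemma sig_deriv f df x1 y : (forall x, derivable_pt_lim f x (df x)) ->
  derivable_pt_lim (jsig f x1) y (df y / 2 - df ((x1 + y)/2) / 2).
Proof. intros Hdf. unfold jsig.
  apply (dpl_eq _ _ ((0 + (df y * / 2 + f y * 0)) - df ((x1 + y)/2) * (1/2))); [field|].
  apply (dpl_minus (fun y => f x1 / 2 + f y / 2) (fun y => f ((x1 + y)/2))).
  apply (dpl_plus (fun _ => f x1 / 2) (fun y => f y / 2)). apply dpl_const.
  apply (dpl_mult f (fun _ => / 2)); auto. apply dpl_const.
  apply (dpl_comp (fun y => (x1 + y) / 2) f). apply dpl_half. auto. Qed.

Lemma sig_bound f phi df dphi xl xu x1 e : agent_ok f phi df dphi xl xu -> xl <= x1 <= xu -> 0 < e ->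
  exists c, 0 < c /\ forall y, xl <= y <= xu -> e < Rabs (y - x1) -> c <= 2 * jsig f x1 y.
Proof. intros H Hx1 He. pose proof H as H'. agent H'.
  set (sd := fun y => df y / 2 - df ((x1 + y)/2) / 2).
  assert (Hd : forall c, derivable_pt_lim (jsig f x1) c (sd c)) by (intro; apply sig_deriv; auto).
  assert (S0 : jsig f x1 x1 = 0) by (unfold jsig; replace ((x1 + x1)/2) with x1 by field; field).
  assert (Pr : forall c, x1 < c <= xu -> 0 < sd c).
  { intros. unfold sd. pose proof (sconvex_deriv_mono f df xl xu ((x1 + c)/2) c Hfc Hdf ltac:(lra) ltac:(lra) ltac:(lra)). lra. }
  assert (Pl : forall c, xl <= c < x1 -> sd c < 0).
  { intros. unfold sd. pose proof (sconvex_deriv_mono f df xl xu c ((x1 + c)/2) Hfc Hdf ltac:(lra) ltac:(lra) ltac:(lra)). lra. }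
  assert (R : exists c, 0 < c /\ forall y, xl <= y <= xu -> x1 + e < y -> c <= 2 * jsig f x1 y).
  { destruct (Rle_dec (x1 + e) xu).
    - exists (2 * jsig f x1 (x1 + e)). split.
      + assert (jsig f x1 x1 < jsig f x1 (x1 + e)). apply (mvt_incr _ sd); auto. lra.
        intros; apply Pr; lra. lra.
      + intros. assert (jsig f x1 (x1 + e) < jsig f x1 y). apply (mvt_incr _ sd); auto.
        intros; apply Pr; lra. lra.
    - exists 1. split; [lra|]. intros; lra. }
  assert (L : exists c, 0 < c /\ forall y, xl <= y <= xu -> y < x1 - e -> c <= 2 * jsig f x1 y).
  { destruct (Rle_dec xl (x1 - e)).
    - exists (2 * jsig f x1 (x1 - e)). split.
      + assert (jsig f x1 x1 < jsig f x1 (x1 - e)). apply (mvt_decr _ sd); auto. lra.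
        intros; apply Pl; lra. lra.
      + intros. assert (jsig f x1 (x1 - e) < jsig f x1 y). apply (mvt_decr _ sd); auto.
        intros; apply Pl; lra. lra.
    - exists 1. split; [lra|]. intros; lra. }
  destruct R as [cr [Hcr R]]. destruct L as [cl [Hcl L]].
  exists (Rmin cr cl). split. apply Rmin_pos; auto.
  intros y Hy Hye. pose proof (Rmin_l cr cl). pose proof (Rmin_r cr cl).
  destruct (Rle_dec 0 (y - x1)).
  - rewrite Rabs_pos_eq in Hye by lra. specialize (R y Hy ltac:(lra)). lra.
  - rewrite Rabs_left in Hye by lra. specialize (L y Hy ltac:(lra)). lra. Qed.

Definition Qf N (a : nat -> nat -> bool) (l : nat -> R) :=
  sumN N (fun p => sumN N (fun q => if a p q then (l p - l q) * (l p - l q) else 0)).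

Lemma sqnn (x : R) : 0 <= x * x.
Proof. apply Rle_0_sqr. Qed.

Lemma Qf_nonneg N a l : 0 <= Qf N a l.
Proof. unfold Qf. apply sumN_nonneg; intros. apply sumN_nonneg; intros.
  destruct (a i i0); [apply sqnn|lra]. Qed.

Lemma Qf_term N a l p q : (p < N)%nat -> (q < N)%nat -> a p q = true ->
  (l p - l q) * (l p - l q) <= Qf N a l.
Proof. intros. unfold Qf.
  eapply Rle_trans; [|apply (sumN_term _ _ p); auto].
  - eapply Rle_trans; [|apply (sumN_term _ (fun q => if a p q then (l p - l q) * (l p - l q) else 0) q); auto].
    rewrite H1. lra. intros; destruct (a p i); [apply sqnn|lra].
  - intros. apply sumN_nonneg; intros. destruct (a i i0); [apply sqnn|lra]. Qed.

Lemma reach_bound N a i j : reach N a i j -> exists n : nat, forall l c kap, 0 < kap ->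
  c * (l i - l j) <= INR n * (kap * Qf N a l + c * c / (4 * kap)).
Proof. induction 1.
  - exists 0%nat. intros. simpl. lra.
  - destruct IHreach as [n Hn]. exists (S n). intros lv c kap Hk.
    specialize (Hn lv c kap Hk). rewrite S_INR.
    pose proof (Qf_term N a lv i j H H0 H1).
    assert (c * (lv i - lv j) <= kap * ((lv i - lv j) * (lv i - lv j)) + c * c / (4 * kap)).
    { assert (kap * ((lv i - lv j) * (lv i - lv j)) + c * c / (4 * kap) - c * (lv i - lv j)
              = kap * (((lv i - lv j) - c / (2 * kap)) * ((lv i - lv j) - c / (2 * kap)))) by (field; lra).
      pose proof (Rmult_le_pos kap _ ltac:(lra) (sqnn ((lv i - lv j) - c / (2 * kap)))). lra. }
    nra. Qed.

Lemma conn_bound N a : connected N a -> (0 < N)%nat -> exists M : nat, forall i, (i < N)%nat ->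
  forall l c kap, 0 < kap -> c * (l i - l 0%nat) <= INR M * (kap * Qf N a l + c * c / (4 * kap)).
Proof. intros Hc HN.
  assert (forall n, (n <= N)%nat -> exists M : nat, forall i, (i < n)%nat ->
    forall l c kap, 0 < kap -> c * (l i - l 0%nat) <= INR M * (kap * Qf N a l + c * c / (4 * kap))).
  { induction n; intros.
    - exists 0%nat. intros; lia.
    - destruct (IHn ltac:(lia)) as [M HM].
      destruct (reach_bound N a n 0 (Hc n 0%nat ltac:(lia) HN)) as [m Hm].
      exists (M + m)%nat. intros i Hi l c kap Hk.
      assert (0 <= kap * Qf N a l + c * c / (4 * kap)).
      { pose proof (Qf_nonneg N a l). assert (0 <= c * c / (4 * kap)).
        apply Rmult_le_pos. nra. left; apply Rinv_0_lt_compat; lra. nra. }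
      rewrite plus_INR. pose proof (pos_INR M). pose proof (pos_INR m).
      destruct (Nat.eq_dec i n).
      + subst. specialize (Hm l c kap Hk). nra.
      + specialize (HM i ltac:(lia) l c kap Hk). nra. }
  apply (H N). lia. Qed.

Lemma sumN_opp n F : sumN n (fun i => - F i) = - sumN n F.
Proof. induction n; simpl; [lra|]. rewrite IHn. lra. Qed.

Lemma lap_id N (a : nat -> nat -> bool) (Hsym : forall i j, a i j = a j i) x y :
  sumN N (fun p => sumN N (fun q => if a p q then (x p - x q) * (y p - y q) else 0))
  = 2 * sumN N (fun p => y p * sumN N (fun q => if a q p then x p - x q else 0)).
Proof.
  assert (E1 : sumN N (fun p => sumN N (fun q => if a p q then (x p - x q) * (y p - y q) else 0))
    = sumN N (fun p => sumN N (fun q => if a p q then (x p - x q) * y p else 0))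
    - sumN N (fun p => sumN N (fun q => if a p q then (x p - x q) * y q else 0))).
  { rewrite <- sumN_minus. apply sumN_ext; intros. rewrite <- sumN_minus. apply sumN_ext; intros.
    destruct (a i i0); ring. }
  assert (E2 : sumN N (fun p => sumN N (fun q => if a p q then (x p - x q) * y q else 0))
    = - sumN N (fun p => sumN N (fun q => if a p q then (x p - x q) * y p else 0))).
  { rewrite sumN_swap. rewrite <- sumN_opp. apply sumN_ext; intros. rewrite <- sumN_opp. apply sumN_ext; intros.
    rewrite (Hsym i0 i). destruct (a i i0); ring. }
  rewrite E1, E2. 
  assert (E3 : sumN N (fun p => sumN N (fun q => if a p q then (x p - x q) * y p else 0))
    = sumN N (fun p => y p * sumN N (fun q => if a q p then x p - x q else 0))).
  { apply sumN_ext; intros. rewrite <- sumN_scal. apply sumN_ext; intros.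
    rewrite (Hsym i0 i). destruct (a i i0); ring. }
  rewrite E3. ring. Qed.

Lemma neg_inner N (a : nat -> nat -> bool) x p :
  sumN N (fun q => if a q p then x p - x q else 0) = - sumN N (fun q => if a q p then x q - x p else 0).
Proof. rewrite <- sumN_opp. apply sumN_ext; intros. destruct (a i p); ring. Qed.

Definition RL (g : R -> R) (l : R) := limit1_in g (fun s => 0 <= s) l 0.

Lemma RL_comp g l h : RL g l -> continuity_pt h l -> RL (fun s => h (g s)) (h l).
Proof. intros Hg Hc e He. destruct (Hc e He) as [d1 [Hd1 Hc']].
  destruct (Hg d1 Hd1) as [d [Hd Hg']]. exists d. split; auto.
  intros x [Dx Hx]. specialize (Hg' x (conj Dx Hx)). simpl in *.
  destruct (Req_dec (g x) l) as [E|E].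
  - rewrite E. unfold R_dist. rewrite Rminus_diag, Rabs_R0. lra.
  - apply (Hc' (g x)); split; [split; [exact I| intro; apply E; auto] | exact Hg']. Qed.

Lemma RL_sumN n F L : (forall i, (i < n)%nat -> RL (F i) (L i)) ->
  RL (fun s => sumN n (fun i => F i s)) (sumN n L).
Proof. induction n; intros; simpl.
  - exact (limit_free (fun _ => 0) _ 0 0).
  - apply (limit_plus (fun s => sumN n (fun i => F i s)) (F n)).
    apply IHn; intros; apply H; lia. apply H; lia. Qed.

Lemma RL_const c : RL (fun _ => c) c.
Proof. exact (limit_free (fun _ => c) _ 0 0). Qed.

Definition all_ok N (f phi df dphi : nat -> R -> R) (xl xu : nat -> R) :=
  forall i, (i < N)%nat -> agent_ok (f i) (phi i) (df i) (dphi i) (xl i) (xu i).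

Definition gI (f phi df dphi : nat -> R -> R) (xl xu d : nat -> R) i lam :=
  gfun (f i) (phi i) (df i) (dphi i) (xl i) (xu i) (d i) lam.
Definition uI (phi df dphi : nat -> R -> R) (xl xu d : nat -> R) i lam :=
  ufun (phi i) (df i) (dphi i) (xl i) (xu i) (d i) lam.

Lemma rhs_eq N a d xl xu phi df dphi k lv i :
  dyn_rhs N a d xl xu phi df dphi k lv i =
  uI phi df dphi xl xu d i (lv i) + k * sumN N (fun j => if a j i then lv j - lv i else 0).
Proof. reflexivity. Qed.

Definition Wf N a k (f phi df dphi : nat -> R -> R) (xl xu d : nat -> R) (lv : nat -> R) :=
  sumN N (fun i => gI f phi df dphi xl xu d i (lv i)) - k / 4 * Qf N a lv.

Lemma W_ineq N a k f phi df dphi xl xu d lstar lv :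
  all_ok N f phi df dphi xl xu -> (forall i j, a i j = a j i) -> 0 < k ->
  sumN N (fun i => gI f phi df dphi xl xu d i lstar) - Wf N a k f phi df dphi xl xu d lv
  <= sumN N (fun i => dyn_rhs N a d xl xu phi df dphi k lv i * (lstar - lv i)).
Proof. intros Hok Hsym Hk. unfold Wf.
  set (T := fun p => sumN N (fun q => if a q p then lv q - lv p else 0)).
  assert (E1 : sumN N (fun i => dyn_rhs N a d xl xu phi df dphi k lv i * (lstar - lv i))
     = sumN N (fun i => uI phi df dphi xl xu d i (lv i) * (lstar - lv i)) + k * sumN N (fun i => (lstar - lv i) * T i)).
  { rewrite <- sumN_scal, <- sumN_plus. apply sumN_ext; intros. rewrite rhs_eq. unfold T. ring. }
  assert (E2 : sumN N (fun i => (lstar - lv i) * T i) = Qf N a lv / 2).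
  { pose proof (lap_id N a Hsym lv (fun p => lstar - lv p)) as L.
    assert (L1 : sumN N (fun p => sumN N (fun q => if a p q then (lv p - lv q) * ((lstar - lv p) - (lstar - lv q)) else 0)) = - Qf N a lv).
    { unfold Qf. rewrite <- sumN_opp. apply sumN_ext; intros. rewrite <- sumN_opp. apply sumN_ext; intros.
      destruct (a i i0); ring. }
    assert (L2 : sumN N (fun p => (lstar - lv p) * sumN N (fun q => if a q p then lv p - lv q else 0))
       = - sumN N (fun i => (lstar - lv i) * T i)).
    { rewrite <- sumN_opp. apply sumN_ext; intros. unfold T. rewrite neg_inner. ring. }
    cbv beta in L. rewrite L1, L2 in L. lra. }
  assert (E3 : sumN N (fun i => gI f phi df dphi xl xu d i lstar) - sumN N (fun i => gI f phi df dphi xl xu d i (lv i))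
    <= sumN N (fun i => uI phi df dphi xl xu d i (lv i) * (lstar - lv i))).
  { rewrite <- sumN_minus. apply sumN_le. intros. unfold gI, uI.
    pose proof (g_super _ _ _ _ _ _ (d i) (lv i) lstar (Hok i H)). lra. }
  pose proof (Qf_nonneg N a lv).
  rewrite E1, E2. assert (k / 4 * Qf N a lv <= k * (Qf N a lv / 2)).
  { unfold Rdiv. assert (0 <= k * Qf N a lv) by (apply Rmult_le_pos; lra). nra. }
  lra. Qed.

Lemma Wd_id N a k phi df dphi xl xu d lv (Hsym : forall i j, a i j = a j i) :
  let r := fun i => dyn_rhs N a d xl xu phi df dphi k lv i in
  sumN N (fun i => uI phi df dphi xl xu d i (lv i) * r i)
  - k / 4 * sumN N (fun p => sumN N (fun q => if a p q then 2 * ((lv p - lv q) * (r p - r q)) else 0))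
  = sumN N (fun i => r i * r i).
Proof. intro r.
  assert (E1 : sumN N (fun p => sumN N (fun q => if a p q then 2 * ((lv p - lv q) * (r p - r q)) else 0))
    = 2 * sumN N (fun p => sumN N (fun q => if a p q then (lv p - lv q) * (r p - r q) else 0))).
  { rewrite <- sumN_scal. apply sumN_ext; intros. rewrite <- sumN_scal. apply sumN_ext; intros.
    destruct (a i i0); ring. }
  rewrite E1, (lap_id N a Hsym lv r).
  replace (k / 4 * (2 * (2 * sumN N (fun p => r p * sumN N (fun q => if a q p then lv p - lv q else 0)))))
    with (sumN N (fun p => k * (r p * sumN N (fun q => if a q p then lv p - lv q else 0))))
    by (rewrite sumN_scal; field).
  rewrite <- sumN_minus.
  apply sumN_ext; intros. rewrite neg_inner.
  unfold r. rewrite rhs_eq. ring. Qed.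

Definition Efun N a d xl xu f phi df dphi k lstar (lam : R -> nat -> R) t :=
  1/2 * sumN N (fun i => (lam t i - lstar) * (lam t i - lstar))
  + t * (sumN N (fun i => gI f phi df dphi xl xu d i lstar) - Wf N a k f phi df dphi xl xu d (lam t)).

Lemma E_deriv N a d xl xu f phi df dphi k lstar lam t :
  all_ok N f phi df dphi xl xu ->
  (forall i t, (i < N)%nat -> 0 < t ->
     derivable_pt_lim (fun s => lam s i) t (dyn_rhs N a d xl xu phi df dphi k (lam t) i)) ->
  0 < t ->
  let lv := lam t in
  let r := fun i => dyn_rhs N a d xl xu phi df dphi k lv i in
  derivable_pt_lim (Efun N a d xl xu f phi df dphi k lstar lam) t
   (1/2 * sumN N (fun i => 2 * ((lv i - lstar) * r i))
    + (sumN N (fun i => gI f phi df dphi xl xu d i lstar) - Wf N a k f phi df dphi xl xu d lv)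
    - t * (sumN N (fun i => uI phi df dphi xl xu d i (lv i) * r i)
        - k / 4 * sumN N (fun p => sumN N (fun q => if a p q then 2 * ((lv p - lv q) * (r p - r q)) else 0)))).
Proof. intros Hok Hl Ht lv r.
  assert (C1 : forall i, (i < N)%nat -> derivable_pt_lim (fun s => (lam s i - lstar) * (lam s i - lstar)) t
     (2 * ((lv i - lstar) * r i))).
  { intros. apply (dpl_eq _ _ ((r i - 0) * (lam t i - lstar) + (lam t i - lstar) * (r i - 0))).
    unfold lv; ring.
    apply (dpl_mult (fun s => lam s i - lstar) (fun s => lam s i - lstar));
    apply (dpl_minus (fun s => lam s i) (fun _ => lstar)); try apply dpl_const; apply Hl; auto. }
  assert (C2 : forall i, (i < N)%nat -> derivable_pt_lim (fun s => gI f phi df dphi xl xu d i (lam s i)) t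
     (uI phi df dphi xl xu d i (lv i) * r i)).
  { intros. apply (dpl_comp (fun s => lam s i) (gI f phi df dphi xl xu d i)). apply Hl; auto.
    unfold gI, uI. apply g_deriv. apply Hok; auto. }
  assert (C3 : forall p q, (p < N)%nat -> (q < N)%nat ->
     derivable_pt_lim (fun s => if a p q then (lam s p - lam s q) * (lam s p - lam s q) else 0) t
     (if a p q then 2 * ((lv p - lv q) * (r p - r q)) else 0)).
  { intros. destruct (a p q); [|apply dpl_const].
    apply (dpl_eq _ _ ((r p - r q) * (lam t p - lam t q) + (lam t p - lam t q) * (r p - r q))).
    unfold lv; ring.
    apply (dpl_mult (fun s => lam s p - lam s q) (fun s => lam s p - lam s q));
    apply (dpl_minus (fun s => lam s p) (fun s => lam s q)); apply Hl; auto. }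
  assert (S1 := dpl_sumN N (fun i s => (lam s i - lstar) * (lam s i - lstar)) _ t C1).
  assert (S2 := dpl_sumN N (fun i s => gI f phi df dphi xl xu d i (lam s i)) _ t C2).
  assert (S3 : derivable_pt_lim (fun s => Qf N a (lam s)) t
     (sumN N (fun p => sumN N (fun q => if a p q then 2 * ((lv p - lv q) * (r p - r q)) else 0)))).
  { unfold Qf. apply (dpl_sumN N (fun p s => sumN N (fun q => if a p q then (lam s p - lam s q) * (lam s p - lam s q) else 0))).
    intros p Hp. apply (dpl_sumN N (fun q s => if a p q then (lam s p - lam s q) * (lam s p - lam s q) else 0)).
    intros q Hq. apply C3; auto. }
  unfold Efun, Wf.
  eapply dpl_eq; [|apply (dpl_plus (fun s => 1/2 * sumN N (fun i => (lam s i - lstar) * (lam s i - lstar)))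
     (fun s => s * (sumN N (fun i => gI f phi df dphi xl xu d i lstar) -
                    (sumN N (fun i => gI f phi df dphi xl xu d i (lam s i)) - k / 4 * Qf N a (lam s)))))].
  2: { apply (dpl_mult (fun _ => 1/2)). apply dpl_const. exact S1. }
  2: { apply (dpl_mult (fun s => s)). apply dpl_id.
       apply (dpl_minus (fun _ => sumN N (fun i => gI f phi df dphi xl xu d i lstar))). apply dpl_const.
       apply (dpl_minus (fun s => sumN N (fun i => gI f phi df dphi xl xu d i (lam s i)))). exact S2.
       apply (dpl_mult (fun _ => k / 4)). apply dpl_const. exact S3. }
  unfold lv. ring. Qed.

Lemma lyap N a d xl xu f phi df dphi k lstar lam :
  all_ok N f phi df dphi xl xu -> (forall i j, a i j = a j i) -> 0 < k ->
  is_solution N a d xl xu phi df dphi k lam ->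
  forall t, 0 < t ->
  t * (sumN N (fun i => gI f phi df dphi xl xu d i lstar) - Wf N a k f phi df dphi xl xu d (lam t))
  <= 1/2 * sumN N (fun i => (lam 0 i - lstar) * (lam 0 i - lstar)).
Proof. intros Hok Hsym Hk [Hl Hc] t Ht.
  set (E := Efun N a d xl xu f phi df dphi k lstar lam).
  set (Ed := fun t => let lv := lam t in
    let r := fun i => dyn_rhs N a d xl xu phi df dphi k lv i in
   (1/2 * sumN N (fun i => 2 * ((lv i - lstar) * r i))
    + (sumN N (fun i => gI f phi df dphi xl xu d i lstar) - Wf N a k f phi df dphi xl xu d lv)
    - t * (sumN N (fun i => uI phi df dphi xl xu d i (lv i) * r i)
        - k / 4 * sumN N (fun p => sumN N (fun q => if a p q then 2 * ((lv p - lv q) * (r p - r q)) else 0))))).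
  assert (HD : forall c, 0 < c -> derivable_pt_lim E c (Ed c)).
  { intros. apply E_deriv; auto. }
  assert (Hneg : forall c, 0 < c -> Ed c <= 0).
  { intros c Hc0. unfold Ed. cbv zeta.
    rewrite (Wd_id N a k phi df dphi xl xu d (lam c) Hsym).
    pose proof (W_ineq N a k f phi df dphi xl xu d lstar (lam c) Hok Hsym Hk).
    assert (0 <= sumN N (fun i => dyn_rhs N a d xl xu phi df dphi k (lam c) i * dyn_rhs N a d xl xu phi df dphi k (lam c) i))
      by (apply sumN_nonneg; intros; apply sqnn).
    assert (1/2 * sumN N (fun i => 2 * ((lam c i - lstar) * dyn_rhs N a d xl xu phi df dphi k (lam c) i))
       + sumN N (fun i => dyn_rhs N a d xl xu phi df dphi k (lam c) i * (lstar - lam c i)) = 0).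
    { rewrite <- sumN_scal, <- sumN_plus. transitivity (sumN N (fun _ => 0)); [|apply sumN_zero].
      apply sumN_ext; intros. field. }
    assert (0 <= c * sumN N (fun i => dyn_rhs N a d xl xu phi df dphi k (lam c) i * dyn_rhs N a d xl xu phi df dphi k (lam c) i))
      by (apply Rmult_le_pos; lra).
    lra. }
  assert (Hmono : forall s, 0 < s < t -> E t <= E s).
  { intros s Hs. destruct (MVT_cor2 E Ed s t ltac:(lra) (fun c Hc => HD c ltac:(lra))) as [c [Ec Hc']].
    specialize (Hneg c ltac:(lra)). nra. }
  set (L0 := 1/2 * sumN N (fun i => (lam 0 i - lstar) * (lam 0 i - lstar))).
  assert (RLl : forall i, (i < N)%nat -> RL (fun s => lam s i) (lam 0 i)).
  { intros i Hi e He. destruct (Hc i Hi e He) as [dl [Hdl Hq]]. exists dl. split; auto.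
    intros x [Dx Hx]. simpl in *. unfold R_dist in *. rewrite Rminus_0_r in Hx.
    apply Hq. split; auto. apply Rabs_def2 in Hx. lra. }
  assert (RLE : RL E (L0 + 0 * (sumN N (fun i => gI f phi df dphi xl xu d i lstar) - Wf N a k f phi df dphi xl xu d (lam 0)))).
  { unfold E, Efun, L0. apply limit_plus.
    - apply (limit_mul (fun _ => 1/2)). apply RL_const.
      apply (RL_sumN N (fun i s => (lam s i - lstar) * (lam s i - lstar))). intros i Hi.
      apply limit_mul; (apply (limit_minus (fun s => lam s i) (fun _ => lstar)); [exact (RLl i Hi) | apply RL_const]).
    - apply (limit_mul (fun s => s)). apply lim_x.
      apply (limit_minus (fun _ => sumN N (fun i => gI f phi df dphi xl xu d i lstar))). apply RL_const.
      unfold Wf. apply limit_minus.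
      + apply (RL_sumN N (fun i s => gI f phi df dphi xl xu d i (lam s i))). intros i Hi.
        apply (RL_comp (fun s => lam s i)). exact (RLl i Hi). unfold gI.
        eapply dpl_cont. apply g_deriv. apply Hok; auto.
      + apply (limit_mul (fun _ => k / 4)). apply RL_const. unfold Qf.
        apply (RL_sumN N (fun p s => sumN N (fun q => if a p q then (lam s p - lam s q) * (lam s p - lam s q) else 0))).
        intros p Hp.
        apply (RL_sumN N (fun q s => if a p q then (lam s p - lam s q) * (lam s p - lam s q) else 0)).
        intros q Hq. destruct (a p q); [|apply RL_const].
        apply limit_mul; (apply (limit_minus (fun s => lam s p) (fun s => lam s q)); [exact (RLl p Hp) | exact (RLl q Hq)]). }
  rewrite Rmult_0_l, Rplus_0_r in RLE.
  assert (Et : E t <= L0).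
  { destruct (Rle_dec (E t) L0); auto. exfalso.
    destruct (RLE (E t - L0) ltac:(lra)) as [dl [Hdl Hq]].
    set (s := Rmin (dl/2) (t/2)).
    assert (0 < s) by (unfold s; apply Rmin_pos; lra).
    assert (s <= dl/2) by apply Rmin_l. assert (s <= t/2) by apply Rmin_r.
    specialize (Hq s). simpl in Hq. unfold R_dist in Hq.
    rewrite Rminus_0_r, Rabs_pos_eq in Hq by lra.
    specialize (Hq ltac:(split; lra)).
    specialize (Hmono s ltac:(lra)). apply Rabs_def2 in Hq. lra. }
  unfold E, Efun in Et.
  assert (0 <= 1/2 * sumN N (fun i => (lam t i - lstar) * (lam t i - lstar))).
  { apply Rmult_le_pos. lra. apply sumN_nonneg; intros; apply sqnn. }
  lra. Qed.

Lemma max_deriv0 F x l : derivable_pt_lim F x l -> (forall y, F y <= F x) -> l = 0.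
Proof. intros Hd Hm. destruct (Rtotal_order l 0) as [Hl|[Hl|Hl]]; auto; exfalso.
  - destruct (Hd (- l) ltac:(lra)) as [[dl Hdl] Hq]. simpl in Hq.
    specialize (Hq (- (dl/2)) ltac:(lra) ltac:(rewrite Rabs_Ropp, Rabs_pos_eq; lra)).
    specialize (Hm (x + - (dl/2))). apply Rabs_def2 in Hq.
    assert ((F (x + - (dl / 2)) - F x) / - (dl / 2) >= 0).
    { unfold Rdiv. rewrite <- Ropp_inv_permute by lra.
      assert (0 < / (dl/2)) by (apply Rinv_0_lt_compat; lra). nra. }
    lra.
  - destruct (Hd l ltac:(lra)) as [[dl Hdl] Hq]. simpl in Hq.
    specialize (Hq (dl/2) ltac:(lra) ltac:(rewrite Rabs_pos_eq; lra)).
    specialize (Hm (x + dl/2)). apply Rabs_def2 in Hq.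
    assert ((F (x + dl / 2) - F x) / (dl / 2) <= 0).
    { unfold Rdiv. assert (0 < / (dl/2)) by (apply Rinv_0_lt_compat; lra). nra. }
    lra. Qed.

Lemma fin_min N (P : nat -> R -> Prop) : (forall i c c', 0 < c' <= c -> P i c -> P i c') ->
  (forall i, (i < N)%nat -> exists c, 0 < c /\ P i c) -> exists c, 0 < c /\ forall i, (i < N)%nat -> P i c.
Proof. intros Hm. induction N; intros.
  - exists 1. split; [lra|]. intros; lia.
  - destruct IHN as [c [Hc HP]]. intros; apply H; lia.
    destruct (H N ltac:(lia)) as [c' [Hc' HP']].
    exists (Rmin c c'). split. apply Rmin_pos; auto.
    pose proof (Rmin_l c c'). pose proof (Rmin_r c c'). pose proof (Rmin_pos c c' Hc Hc').
    intros i Hi. destruct (Nat.eq_dec i N).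
    + subst. apply (Hm N c'); auto.
    + apply (Hm i c); auto. apply HP; lia. Qed.

Lemma small_G R0 t G eta : 0 < eta -> 0 <= R0 -> (R0 + 1) / eta <= t -> t * G <= R0 -> G < eta.
Proof. intros. destruct (Rle_dec G 0). lra.
  assert ((R0 + 1) / eta * G <= t * G) by (apply Rmult_le_compat_r; lra).
  assert ((R0 + 1) / eta * G * eta = (R0 + 1) * G) by (field; lra).
  assert ((R0 + 1) / eta * G * eta <= R0 * eta) by (apply Rmult_le_compat_r; lra).
  assert ((R0 + 1) * G < (R0 + 1) * eta) by lra.
  apply (Rmult_lt_reg_l (R0 + 1)); lra. Qed.

Theorem theorem3
  (N : nat) (d xl xu : nat -> R) (f phi df dphi : nat -> R -> R)
  (a : nat -> nat -> bool)
  (Hint : forall i, (i < N)%nat -> xl i <= xu i)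
  (Hdf : forall i x, (i < N)%nat -> derivable_pt_lim (f i) x (df i x))
  (Hdfc : forall i x, (i < N)%nat -> continuity_pt (df i) x)
  (Hdphi : forall i x, (i < N)%nat -> derivable_pt_lim (phi i) x (dphi i x))
  (Hdphic : forall i x, (i < N)%nat -> continuity_pt (dphi i) x)
  (Hfconv : forall i, (i < N)%nat -> strictly_convex_on (f i) (xl i) (xu i))
  (Hphiconv : forall i, (i < N)%nat -> convex_on (phi i) (xl i) (xu i))
  (Hdphi1 : forall i x, (i < N)%nat -> xl i <= x <= xu i -> dphi i x < 1)
  (Hdfpos : forall i x, (i < N)%nat -> xl i <= x <= xu i -> 0 < df i x)
  (Hsym : forall i j, a i j = a j i)
  (Hconn : connected N a)
  (Hfeas : sumN N (fun i => xl i - phi i (xl i)) <= sumN N d /\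
           sumN N d <= sumN N (fun i => xu i - phi i (xu i)))
  (lstar : R)
  (Hmax : forall mu, gm N d xl xu f phi df dphi mu
                     <= gm N d xl xu f phi df dphi lstar) :
  forall eps, 0 < eps ->
  exists kbar, 0 < kbar /\
  exists T : (nat -> R) -> R -> R,
  forall k, kbar < k ->
  forall lam : R -> nat -> R,
    is_solution N a d xl xu phi df dphi k lam ->
    forall i t, (i < N)%nat -> T (lam 0) k <= t ->
      Rabs (xhat (df i) (dphi i) (xl i) (xu i) (lam t i)
            - xhat (df i) (dphi i) (xl i) (xu i) lstar) <= eps.
Proof.
  intros eps Heps.
  destruct (Nat.eq_dec N 0) as [HN0|HN0].
  { exists 1. split; [lra|]. exists (fun _ _ => 0). intros; lia. }
  assert (Hok : all_ok N f phi df dphi xl xu).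
  { intros i Hi. repeat split; intros; auto. }
  set (Xs := fun i => xhat (df i) (dphi i) (xl i) (xu i) lstar).
  set (us := fun i => uI phi df dphi xl xu d i lstar).
  assert (Hsum0 : sumN N us = 0).
  { apply (max_deriv0 (fun mu => sumN N (fun i => gI f phi df dphi xl xu d i mu)) lstar).
    apply (dpl_sumN N (fun i mu => gI f phi df dphi xl xu d i mu) us lstar).
    intros i Hi. unfold gI, us, uI. apply g_deriv. apply Hok; auto.
    intro y. exact (Hmax y). }
  destruct (fin_min N (fun i c => forall y, xl i <= y <= xu i -> eps < Rabs (y - Xs i) ->
      c <= 2 * jsig (f i) (Xs i) y)) as [c [Hc Hgap]].
  { intros. pose proof (H0 y H1 H2). lra. }
  { intros i Hi. apply (sig_bound (f i) (phi i) (df i) (dphi i)); auto.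
    unfold Xs. apply (X_in (f i) (phi i)). apply Hok; auto. }
  destruct (conn_bound N a Hconn ltac:(lia)) as [M HM].
  set (Mr := INR M + 1).
  assert (HMr : 0 < Mr) by (unfold Mr; pose proof (pos_INR M); lra).
  set (S := sumN N (fun i => us i * us i)).
  assert (HS : 0 <= S) by (apply sumN_nonneg; intros; apply sqnn).
  set (Nr := INR N).
  assert (HNr : 0 < Nr) by (unfold Nr; apply lt_0_INR; lia).
  set (C := Nr * Mr * Mr * S).
  assert (HC : 0 <= C) by (unfold C; repeat apply Rmult_le_pos; lra).
  set (eta := c / 2).
  exists (2 * C / c + 1). split.
  { assert (0 <= 2 * C / c) by (apply Rmult_le_pos; [lra| left; apply Rinv_0_lt_compat; lra]). lra. }
  exists (fun l0 _ => (1/2 * sumN N (fun i => (l0 i - lstar) * (l0 i - lstar)) + 1) / eta).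
  intros k Hk lam Hsol i t Hi Ht.
  assert (Hk0 : 0 < k).
  { assert (0 <= 2 * C / c) by (apply Rmult_le_pos; [lra| left; apply Rinv_0_lt_compat; lra]). lra. }
  set (R0 := 1/2 * sumN N (fun i => (lam 0 i - lstar) * (lam 0 i - lstar))).
  assert (HR0 : 0 <= R0) by (unfold R0; apply Rmult_le_pos; [lra| apply sumN_nonneg; intros; apply sqnn]).
  fold R0 in Ht.
  assert (Heta : 0 < eta) by (unfold eta; lra).
  assert (Htp : 0 < t).
  { assert (0 < (R0 + 1) / eta) by (apply Rdiv_lt_0_compat; lra). lra. }
  set (lv := lam t).
  set (gstar := sumN N (fun i => gI f phi df dphi xl xu d i lstar)).
  pose proof (lyap N a d xl xu f phi df dphi k lstar lam Hok Hsym Hk0 Hsol t Htp) as HL.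
  fold R0 gstar lv in HL.
  set (G := gstar - Wf N a k f phi df dphi xl xu d lv). fold G in HL.
  assert (HG : G < eta) by (apply (small_G R0 t); auto).
  set (D' := fun j => Lr (f j) (phi j) (d j) (Xs j) (lv j) - gI f phi df dphi xl xu d j (lv j)).
  assert (HD'nn : forall j, (j < N)%nat -> 0 <= D' j).
  { intros j Hj. unfold D', gI, gfun. pose proof (X_min (f j) (phi j) (df j) (dphi j) (xl j) (xu j) (d j) (lv j) (Xs j) (Hok j Hj)
      ltac:(unfold Xs; apply (X_in (f j) (phi j)); apply Hok; auto)).
    unfold Xs in *. lra. }
  assert (Hdec : G = sumN N D' + sumN N (fun j => (lstar - lv j) * us j) + k / 4 * Qf N a lv).
  { unfold G, Wf, gstar.
    assert (sumN N (fun i => gI f phi df dphi xl xu d i lstar) =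
            sumN N (fun j => D' j + (lstar - lv j) * us j + gI f phi df dphi xl xu d j (lv j))).
    { apply sumN_ext; intros. unfold D', us, uI, ufun, gI, gfun, Xs, Lr. ring. }
    rewrite H, !sumN_plus. ring. }
  assert (Hpath : sumN N (fun j => (lv j - lstar) * us j) <= k / 4 * Qf N a lv + C / k).
  { set (kap := k / (4 * Nr * Mr)).
    assert (Hkap : 0 < kap) by (unfold kap; apply Rdiv_lt_0_compat; [lra| nra]).
    assert (E1 : sumN N (fun j => (lv j - lstar) * us j) = sumN N (fun j => us j * (lv j - lv 0%nat))).
    { assert (sumN N (fun j => (lv j - lstar) * us j) = sumN N (fun j => us j * (lv j - lv 0%nat)) + (lv 0%nat - lstar) * sumN N us).
      { rewrite <- sumN_scal, <- sumN_plus. apply sumN_ext; intros; ring. }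
      rewrite H, Hsum0. ring. }
    rewrite E1.
    assert (B : forall j, (j < N)%nat -> us j * (lv j - lv 0%nat) <= Mr * (kap * Qf N a lv + us j * us j / (4 * kap))).
    { intros j Hj. specialize (HM j Hj lv (us j) kap Hkap).
      assert (0 <= kap * Qf N a lv + us j * us j / (4 * kap)).
      { pose proof (Qf_nonneg N a lv). assert (0 <= us j * us j / (4 * kap)).
        apply Rmult_le_pos. apply sqnn. left; apply Rinv_0_lt_compat; lra. nra. }
      unfold Mr. lra. }
    eapply Rle_trans. apply (sumN_le _ _ _ B).
    rewrite sumN_scal, sumN_plus, sumN_const.
    assert (E2 : sumN N (fun j => us j * us j / (4 * kap)) = S / (4 * kap)).
    { unfold S. unfold Rdiv. rewrite <- (Rmult_comm (/ (4 * kap))), <- sumN_scal. apply sumN_ext; intros; ring. }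
    rewrite E2. fold Nr.
    assert (Mr * (Nr * (kap * Qf N a lv)) = k / 4 * Qf N a lv) by (unfold kap; field; lra).
    assert (Mr * (S / (4 * kap)) = C / k) by (unfold kap, C; field; lra).
    lra. }
  assert (HCk : C / k < c / 2).
  { assert (2 * C / c < k) by lra.
    apply (Rmult_lt_compat_r (c/2)) in H; [|lra].
    replace (2 * C / c * (c / 2)) with C in H by (field; lra).
    apply (Rmult_lt_reg_r k); [lra|]. replace (C / k * k) with C by (field; lra). lra. }
  assert (HsumD : sumN N D' < c).
  { assert (sumN N (fun j => (lstar - lv j) * us j) = - sumN N (fun j => (lv j - lstar) * us j)).
    { rewrite <- sumN_opp. apply sumN_ext; intros; ring. }
    unfold eta in HG. lra. }
  pose proof (sumN_term N D' i HD'nn Hi) as HDi.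
  pose proof (gap (f i) (phi i) (df i) (dphi i) (xl i) (xu i) (d i) (lv i) (Xs i) (Hok i Hi)
     ltac:(unfold Xs; apply (X_in (f i) (phi i)); apply Hok; auto)) as Hgp.
  destruct (Rle_dec (Rabs (xhat (df i) (dphi i) (xl i) (xu i) (lam t i) - xhat (df i) (dphi i) (xl i) (xu i) lstar)) eps) as [|Hn]; auto.
  exfalso. apply Rnot_le_lt in Hn.
  specialize (Hgap i Hi (xhat (df i) (dphi i) (xl i) (xu i) (lv i))
     (X_in (f i) (phi i) (df i) (dphi i) (xl i) (xu i) (lv i) (Hok i Hi)) Hn).
  assert (Hq : D' i = Lr (f i) (phi i) (d i) (Xs i) (lv i) - Lr (f i) (phi i) (d i) (xhat (df i) (dphi i) (xl i) (xu i) (lv i)) (lv i)) by reflexivity.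
  lra.
Qed.
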